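(* Let $a$ and $b$ be relatively prime integers with $1<a<b$, let $(u,v)$ be the definitely least solution of $ax+by=1$, and let $S=\langle a,b\rangle$. Then every nonempty set $I_{i,a}(S)$, $i\in\{1,\dots,a-1\}$, has exactly $|u|$ elements.
   Context: $\langle a,b\rangle=\{\lambda_1a+\lambda_2b:\lambda_1,\lambda_2\in\mathbb{N}\}$. $I(S)$ is the set of isolated gaps of $S$ ($x\in\mathbb{N}\setminus S$ with $x-1,x+1\in S$), and $I_{i,a}(S)=\{s\in I(S):s\equiv i\pmod a\}$. The definitely least solution $(u,v)$ of $ax+by=1$ is the unique integer solution with $|u|,|v|$ minimal; equivalently the one with $|u|\le b/2$, $|v|\le a/2$. *)

(* Defs.v *)
From mathcomp Require Import all_boot all_order all_algebra.
Set Implicit Arguments. Unset Strict Implicit. Unset Printing Implicit Defensive.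
Import Order.TTheory GRing.Theory Num.Theory.

Definition in_semigroup2 (a b x : nat) : Prop :=
  exists l1 l2 : nat, x = l1 * a + l2 * b.

Definition isolated_gap (a b x : nat) : Prop :=
  0 < x /\ ~ in_semigroup2 a b x /\ in_semigroup2 a b x.-1 /\ in_semigroup2 a b x.+1.

Definition in_I_ia (a b i x : nat) : Prop :=
  isolated_gap a b x /\ x %% a = i %% a.

Definition definitely_least (a b : nat) (u v : int) : Prop :=
  (a%:Z * u + b%:Z * v = 1)%R /\ (2 * `|u| <= b)%N /\ (2 * `|v| <= a)%N.

(* Main.v *)
Require Import Defs.
From mathcomp Require Import all_boot all_order all_algebra zify.
Import Order.TTheory GRing.Theory Num.Theory.
Set Implicit Arguments.

Lemma signs (a b : nat) (u v : int) : 1 < a -> 1 < b -> (a%:Z * u + b%:Z * v = 1)%R ->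
  (b * `|v| = a * `|u| + 1)%N \/ (a * `|u| = b * `|v| + 1)%N.
Proof. move=> ha hb e. case: u e => [n|n]; case: v => [m|m] => e /=; nia. Qed.

Lemma memS a b x be p q : 0 < a -> coprime a b -> be < a ->
  x + p * a = be * b + q * a -> (in_semigroup2 a b x <-> be * b <= x).
Proof.
move=> a0 cop hbe E; split.
- move=> [l1 [l2 Ex]]. case: (leqP be l2) => h.
    have := leq_mul h (leqnn b). lia.
  exfalso.
  have E2 : (be - l2) * b + q * a = (l1 + p) * a.
    rewrite mulnBl mulnDl. have := leq_mul (ltnW h) (leqnn b). lia.
  have : a %| (be - l2) * b.
    by rewrite -(dvdn_addr _ (dvdn_mull q (dvdnn a))) addnC E2 dvdn_mull.
  rewrite Gauss_dvdl // => /dvdn_leq. lia.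
- move=> h. exists (q - p), be.
  have : p * a <= q * a by lia.
  rewrite leq_pmul2r // => hpq. rewrite mulnBl. lia.
Qed.

Arguments memS {a b x be p q}.

Lemma pos_lem a b n m be k : 1 < a -> 2 * n <= b -> 2 * m <= a ->
  (b * m = a * n + 1 \/ a * n = b * m + 1) -> m <= be -> a <= be + m ->
  1 <= k <= n -> k * a < be * b.
Proof.
move=> ha h2n h2m Heq h1 h2 /andP[k1 kn].
have ka : k * a <= n * a by rewrite leq_pmul2r; lia.
case: Heq => Heq.
- have := leq_mul h1 (leqnn b). lia.
- case: (ltnP m be) => hm.
    have := leq_mul hm (leqnn b). lia.
  have hbm : be = m by lia.
  subst be. exfalso. have hm2 : a = 2 * m by lia. subst a. nia.
Qed.

Arguments pos_lem {a b n m be k}.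

Lemma core a b n m be x p q : 1 < a -> a < b -> coprime a b -> 2 * n <= b -> 2 * m <= a ->
  (b * m = a * n + 1 \/ a * n = b * m + 1) -> be < a -> x + p * a = be * b + q * a ->
  isolated_gap a b x <->
  [/\ m <= be, a <= be + m & exists k, 1 <= k <= n /\ x + k * a = be * b].
Proof.
move=> ha hab cop h2n h2m Heq hbe E.
have a0 : 0 < a by lia.
have m1 : 0 < m.
  rewrite lt0n; apply/eqP => m0; subst m.
  case: Heq; rewrite muln0 ?addn0 => H; [lia | move/eqP: H; rewrite muln_eq1; lia].
split.
- move=> [x0 [nS [Sm Sp]]].
  have hx : x < be * b.
    rewrite ltnNge; apply/negP => h; apply: nS; exact: (memS a0 cop hbe E).2 h.
  have : q * a < p * a by lia.
  rewrite ltn_pmul2r // => hqp.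
  have Ek : x + (p - q) * a = be * b by rewrite mulnBl; lia.
  move: (p - q) Ek (subn_gt0 q p) => k Ek; rewrite hqp => k1.
  have hka : a <= k * a by have := leq_mul k1 (leqnn a); lia.
  case: Heq => Heq.
  +
    have C1 : a <= be + m.
      case: (ltnP (be + m) a) => // h1; exfalso.
      have E' : x.+1 + (k + n) * a = (be + m) * b + 0 * a by rewrite !mulnDl; lia.
      have := (memS a0 cop h1 E').1 Sp. rewrite mulnDl. lia.
    case: (ltnP be m) => h2.
      exfalso.
      have h3 : be + a - m < a by lia.
      have E' : x.-1 + (k + b) * a = (be + a - m) * b + n * a.
        have := leq_mul (ltnW (leq_trans h2 (leq_addr a m))) (leqnn b).
        rewrite mulnBl !mulnDl. lia.
      have := (memS a0 cop h3 E').1 Sm.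
      have := leq_mul (leq_trans (ltnW h2) (leq_addr a m)) (leqnn b).
      rewrite mulnBl !mulnDl. lia.
    have h3 : be - m < a by lia.
    have E' : x.-1 + k * a = (be - m) * b + n * a.
      have := leq_mul h2 (leqnn b). rewrite mulnBl. lia.
    have := (memS a0 cop h3 E').1 Sm.
    have := leq_mul h2 (leqnn b). rewrite mulnBl => hh hh2.
    have : k * a <= n * a by lia.
    rewrite leq_pmul2r // => kn.
    split => //; exists k; split => //; lia.
  +
    have C1 : a <= be + m.
      case: (ltnP (be + m) a) => // h1; exfalso.
      have E' : x.-1 + (k + n) * a = (be + m) * b + 0 * a by rewrite !mulnDl; lia.
      have := (memS a0 cop h1 E').1 Sm. rewrite mulnDl. lia.
    case: (ltnP be m) => h2.
      exfalso.
      have h3 : be + a - m < a by lia.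
      have E' : x.+1 + (k + b) * a = (be + a - m) * b + n * a.
        have := leq_mul (ltnW (leq_trans h2 (leq_addr a m))) (leqnn b).
        rewrite mulnBl !mulnDl. lia.
      have := (memS a0 cop h3 E').1 Sp.
      have h4 : be.+1 <= be + a - m by lia.
      have := leq_mul h4 (leqnn b).
      have := leq_mul (leq_trans (ltnW h2) (leq_addr a m)) (leqnn b).
      rewrite mulnBl !mulnDl. lia.
    have h3 : be - m < a by lia.
    have E' : x.+1 + k * a = (be - m) * b + n * a.
      have := leq_mul h2 (leqnn b). rewrite mulnBl. lia.
    have := (memS a0 cop h3 E').1 Sp.
    have := leq_mul h2 (leqnn b). rewrite mulnBl => hh hh2.
    have : k * a <= n * a by lia.
    rewrite leq_pmul2r // => kn.
    split => //; exists k; split => //; lia.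
- move=> [h1 h2 [k [hk Ek]]].
  have hkb := pos_lem ha h2n h2m Heq h1 h2 hk.
  case/andP: hk => k1 kn.
  have hka : a <= k * a by have := leq_mul k1 (leqnn a); lia.
  have hkn : k * a <= n * a by rewrite leq_pmul2r.
  have hknb : (k + n) * a <= b * a by rewrite leq_pmul2r //; lia.
  have hm : m * b <= be * b := leq_mul h1 (leqnn b).
  have hm2 : a * b <= be * b + m * b by rewrite -mulnDl; exact: leq_mul h2 (leqnn b).
  have hA : be - m < a by lia.
  have hB : be + m - a < a by lia.
  split; first lia.
  split.
    have E0 : x + k * a = be * b + 0 * a by lia.
    move=> /(memS a0 cop hbe E0). lia.
  case: Heq => Heq; split.
  + have E' : x.-1 + k * a = (be - m) * b + n * a by rewrite mulnBl; lia.
    apply/(memS a0 cop hA E'). rewrite mulnBl. lia.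
  + have E' : x.+1 + (k + n) * a = (be + m - a) * b + b * a by rewrite mulnBl !mulnDl; lia.
    apply/(memS a0 cop hB E'). rewrite mulnBl !mulnDl. lia.
  + have E' : x.-1 + (k + n) * a = (be + m - a) * b + b * a by rewrite mulnBl !mulnDl; lia.
    apply/(memS a0 cop hB E'). rewrite mulnBl !mulnDl. lia.
  + have E' : x.+1 + k * a = (be - m) * b + n * a by rewrite mulnBl; lia.
    apply/(memS a0 cop hA E'). rewrite mulnBl. lia.
Qed.

Theorem proposition3p11 (a b : nat) (u v : int) :
  1 < a -> a < b -> coprime a b -> definitely_least a b u v ->
  forall i : nat, 1 <= i <= a - 1 ->
    (exists x, in_I_ia a b i x) ->
    exists s : seq nat,
      [/\ uniq s, (forall x, x \in s <-> in_I_ia a b i x) & size s = `|u|%N].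
Proof.
move=> ha hab cop [Heq1 [hu hv]] i hi [x0 hx0].
have a0 : 0 < a by lia.
have Heq : b * `|v|%N = a * `|u|%N + 1 \/ a * `|u|%N = b * `|v|%N + 1.
  exact: (signs _ _ _ _ ha (ltn_trans ha hab) Heq1).
move: Heq hu hv; set n := `|u|%N; set m := `|v|%N => Heq hu hv.
have [be hbe Hbe] : exists2 be, be < a & (be * b) %% a = i %% a.
  case: Heq => Heq.
  - exists ((i * m) %% a); first by rewrite ltn_pmod.
    have H : i * m * b = (i * n) * a + i by nia.
    by rewrite modnMml H modnMDl.
  - exists ((i * (a - 1) * m) %% a); first by rewrite ltn_pmod.
    have H : i * a + i * (a - 1) * m * b = (i * (a - 1) * n) * a + i.
      have -> : i * a = i * (a - 1) + i by rewrite mulnBr muln1 subnK //; exact: leq_pmulr.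
      move: (i * (a - 1)) => c.
      have : c * (a * n) = c * (b * m + 1) by rewrite Heq.
      lia.
    by rewrite modnMml -(modnMDl i) H modnMDl.
have cong : forall x, x %% a = i %% a -> x + (be * b %/ a) * a = be * b + (x %/ a) * a.
  move=> x hx. have := divn_eq x a. have := divn_eq (be * b) a. lia.
case: hx0 => hg0 hm0.
case: ((core _ _ _ _ _ _ _ _ ha hab cop hu hv Heq hbe (cong _ hm0)).1 hg0) => h1 h2 _.
have pl := pos_lem ha hu hv Heq h1 h2.
exists [seq be * b - k * a | k <- iota 1 n]; split.
- rewrite map_inj_in_uniq ?iota_uniq // => k1 k2; rewrite !mem_iota => hk1 hk2 H.
  have := pl k1; have := pl k2. rewrite -?(addnC n) ?addn1 ?ltnS in hk1 hk2.
  move=> p2 p1; have {p1}p1 := p1 hk1; have {p2}p2 := p2 hk2.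
  apply/eqP; rewrite -(eqn_pmul2r a0); apply/eqP; lia.
- move=> x; split.
  + case/mapP => k; rewrite mem_iota => hk ->.
    have hk' : 1 <= k <= n by lia.
    have pk := pl k hk'.
    have E : be * b - k * a + k * a = be * b + 0 * a by lia.
    split.
      apply/(core _ _ _ _ _ _ _ _ ha hab cop hu hv Heq hbe E); split => //; exists k; split => //; lia.
    rewrite -Hbe. have {2}-> : be * b = k * a + (be * b - k * a) by lia.
    by rewrite modnMDl.
  + move=> [hg hm].
    case: ((core _ _ _ _ _ _ _ _ ha hab cop hu hv Heq hbe (cong _ hm)).1 hg) => _ _ [k [hk Ek]].
    apply/mapP; exists k; first by rewrite mem_iota; lia.
    lia.
- by rewrite size_map size_iota.
Qed.
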